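(* In the setting below, for all $u\ne v$ in $V$ and all integers $k\ge184$, $$\nu\big(k_{u,v}(P)+k_{v,u}(P)=k,\ |k_{u,v}(P)-k_{v,u}(P)|\ge k/3\big)\le\frac12\,\nu\big(k_{u,v}(P)+k_{v,u}(P)=k\big).$$
   Context: Let $G=G(V)$ be a finite connected network with symmetric conductances $c_{x,y}\ge0$, $c_x=\sum_yc_{x,y}$; $v_0\in V$; $\ell_v>0$ for $v\in V$, $t=\ell_{v_0}$, $\Gamma=\{L^v_{\tau(t)}=\ell_v\text{ for }v\ne v_0\}$. The continuous-time walk started at $v_0$ jumps from $x$ to $y$ with probability $c_{x,y}/c_x$ after i.i.d. mean-one exponential holding times; $L^v_s=\frac1{c_v}\int_0^s\mathbf 1_{\{X_r=v\}}dr$; $\tau(t)=\inf\{s:L^{v_0}_s>t\}$. $\mathcal P$ is the embedded jump path (successive distinct positions) up to $\tau(t)$; $\Omega$ is the set of paths from $v_0$ to $v_0$ visiting every vertex; $k_{u,v}(P)$ counts traversals of directed edge $\langle u,v\rangle$. $\nu$ is the conditional law of $\mathcal P$ given $\Gamma$ on $\Omega$: $\nu(A)=\sum_{P\in A}\mu(\mathcal P=P,\Gamma)/\sum_{P\in\Omega}\mu(\mathcal P=P,\Gamma)$, with $\mu(\mathcal P=P,\Gamma)=\mathbb P(\mathcal P=P)f_P$ and $f_P$ the conditional density of $(L^v_{\tau(t)})_{v\ne v_0}$ at $(\ell_v)_{v\ne v_0}$ given $\mathcal P=P$. *)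

(* Defs.v *)
From HB Require Import structures.
From mathcomp Require Import all_boot all_order all_algebra.
From mathcomp Require Import all_classical all_reals.
From mathcomp Require Import ereal esum.
From mathcomp Require Import sequences.
From mathcomp.analysis Require Import exp.

Set Implicit Arguments.
Unset Strict Implicit.
Unset Printing Implicit Defensive.
Import Order.TTheory GRing.Theory Num.Theory.
Local Open Scope ring_scope.
Local Open Scope classical_set_scope.

Section Network.
Variables (R : realType) (V : finType) (c : V -> V -> R).

Definition connected_network : Prop :=
  forall x y : V, connect [rel a b | 0 < c a b] x y.

(* Equal to
   c_x = \sum_y c_{x,y} when there are no self-loops; with self-loops the
   holding of the embedded (distinct-positions) path at x has this rate. *)
Definition cout (x : V) : R := \sum_(y | y != x) c x y.

(* Transition probability of the embedded jump path (successive distinct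
   positions). *)
Definition pjump (x y : V) : R := if x == y then 0 else c x y / cout x.

(* Paths are sequences of positions (including the start). *)
Definition steps (P : seq V) : seq (V * V) := zip P (behead P).

Definition kuv (u v : V) (P : seq V) : nat := count (pred1 (u, v)) (steps P).

Definition Omega (v0 : V) : set (seq V) :=
  [set P | [/\ head v0 P = v0, last v0 P = v0, (size P > 0)%N &
            forall v : V, v \in P]].

(* P(path = P): product of jump probabilities times the probability that
   the v0-local time runs out exactly during the last visit to v0, i.e.
   that the number of completed v0-holding periods (each an exponential of
   rate cout v0 in the local-time scale) before t equals m. *)
Definition path_prob (v0 : V) (t : R) (P : seq V) : R :=
  let m := (count (pred1 v0) P).-1 in
  (\prod_(e <- steps P) pjump e.1 e.2) *
  (expR (- (cout v0 * t)) * (cout v0 * t) ^+ m / (m`!)%:R).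

Definition gamma_dens (n : nat) (r l : R) : R :=
  if n is n'.+1 then r ^+ n * l ^+ n' * expR (- (r * l)) / (n'`!)%:R else 0.

(* f_P: conditional density of (L^v_{tau(t)})_{v <> v0} at (ell_v) given
   path = P: independent Gamma(n_v, cout v), n_v = visits of v in P. *)
Definition fP (v0 : V) (ell : V -> R) (P : seq V) : R :=
  \prod_(v | v != v0) gamma_dens (count (pred1 v) P) (cout v) (ell v).

Definition muPG (v0 : V) (ell : V -> R) (P : seq V) : R :=
  path_prob v0 (ell v0) P * fP v0 ell P.

Definition nu (v0 : V) (ell : V -> R) (A : set (seq V)) : R :=
  fine (\esum_(P in A `&` Omega v0) (muPG v0 ell P)%:E) /
  fine (\esum_(P in Omega v0) (muPG v0 ell P)%:E).

End Network.

(* Main.v *)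
Require Import Defs.
From HB Require Import structures.
From mathcomp Require Import all_boot all_order all_algebra.
From mathcomp Require Import all_classical all_reals.
From mathcomp Require Import ereal esum.
From mathcomp Require Import sequences.
From mathcomp.analysis Require Import exp.
From mathcomp Require Import zify ring lra.
Import Order.TTheory GRing.Theory Num.Theory.
Local Open Scope ring_scope.
Local Open Scope classical_set_scope.
Set Implicit Arguments.
Unset Strict Implicit.
Unset Printing Implicit Defensive.
Section Lists.
Variable (V : finType).
Local Open Scope nat_scope.

Lemma steps_cat (s t : seq V) x :
  steps (s ++ x :: t) = steps (rcons s x) ++ steps (x :: t).
Proof.
elim: s => [//|a s IH]; rewrite /steps /=.
by case: s IH => [//|b s] IH /=; rewrite -[zip _ _]/(steps (b :: s ++ x :: t)) IH.
Qed.

Lemma steps_cons_zip (x : V) t : steps (x :: t) = zip (belast x t) t.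
Proof. by elim: t x => [//|y t IH] x; rewrite /steps /= -IH. Qed.

Lemma steps_rcons (s : seq V) x :
  steps (rcons s x) = if s is [::] then [::] else rcons (steps s) (last x s, x).
Proof.
elim: s => [//|a s IH]; rewrite /steps /=.
case: s IH => [//|b s] IH /=.
by rewrite -[zip (b :: rcons s x) _]/(steps (rcons (b :: s) x)) IH.
Qed.

Lemma steps_rev (s : seq V) :
  steps (rev s) = rev (map (fun e => (e.2, e.1)) (steps s)).
Proof.
elim: s => [//|a s IH]; rewrite rev_cons steps_rcons.
case: s IH => [//|b s] IH.
have -> : rev (b :: s) = rcons (rev s) b by rewrite rev_cons.
rewrite -(rev_cons b s) IH.
have -> : steps (a :: b :: s) = (a, b) :: steps (b :: s) by [].
rewrite map_cons rev_cons.
case E: (rcons (rev s) b) => [|x y]; first by case: (rev s) E.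
by rewrite -E last_rcons rev_cons.
Qed.

End Lists.
Section Seg.
Variables (V : finType) (u v : V).
Hypothesis huv : u != v.
Local Open Scope nat_scope.

Lemma head_rev (x : V) s : head x (rev s) = last x s.
Proof. by case/lastP: s => [//|s y]; rewrite rev_rcons last_rcons. Qed.

Lemma last_rev (x : V) s : last x (rev s) = head x s.
Proof. by rewrite -(revK s) head_rev revK. Qed.

Lemma kuv_rev x y (s : seq V) : kuv x y (rev s) = kuv y x s.
Proof.
rewrite /kuv steps_rev count_rev count_map; apply: eq_count => -[a b] /=.
by apply/eqP/eqP => -[-> ->].
Qed.

Lemma kuv_cat x y (s t : seq V) z :
  kuv x y (s ++ z :: t) = kuv x y (rcons s z) + kuv x y (z :: t).
Proof. by rewrite /kuv steps_cat count_cat. Qed.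

Lemma kuv_cons x y (a : V) s :
  kuv x y (a :: s) = ((a == x) && (head a s == y) && (s != [::])) + kuv x y s.
Proof.
case: s => [|b s] /=; rewrite /kuv /= ?andbF ?andbT //.
Qed.

Lemma kuv_free x y (s : seq V) : x \notin s -> kuv x y s = 0.
Proof.
elim: s => [//|a s IH]; rewrite in_cons negb_or => /andP[xa xs].
by rewrite kuv_cons IH // eq_sym (negbTE xa).
Qed.

Lemma kuv_free2 x y (s : seq V) : y \notin s -> kuv x y s = 0.
Proof. by move=> H; rewrite -(revK s) kuv_rev kuv_free // mem_rev. Qed.

Definition hv (w : seq V) := head u w == v.
Definition lv (w : seq V) := last u w == v.

Lemma hv_rev w : hv (rev w) = lv w.
Proof. by rewrite /hv /lv head_rev. Qed.
Lemma lv_rev w : lv (rev w) = hv w.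
Proof. by rewrite /hv /lv last_rev. Qed.

Lemma kuv_suf_uv wn : u \notin wn -> kuv u v (u :: wn) = hv wn.
Proof.
move=> H; rewrite kuv_cons kuv_free // eqxx addn0 /hv.
by case: wn {H} => [|b s] /=; rewrite ?andbT ?andbF ?(negbTE huv).
Qed.

Lemma kuv_suf_vu wn : u \notin wn -> kuv v u (u :: wn) = 0.
Proof. by move=> H; rewrite kuv_cons kuv_free2 // (negbTE huv). Qed.

Lemma kuv_pre_uv w0 : u \notin w0 -> kuv u v (rcons w0 u) = 0.
Proof.
move=> H; rewrite -(revK (rcons w0 u)) kuv_rev rev_rcons kuv_suf_vu //.
by rewrite mem_rev.
Qed.

Lemma kuv_pre_vu w0 : u \notin w0 -> kuv v u (rcons w0 u) = lv w0.
Proof.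
move=> H; rewrite -(revK (rcons w0 u)) kuv_rev rev_rcons kuv_suf_uv ?mem_rev //.
by rewrite hv_rev.
Qed.

Lemma head_rcons_u w : head u (rcons w u) = head u w.
Proof. by case: w. Qed.

Lemma kuv_mid_uv w : u \notin w -> kuv u v (u :: rcons w u) = hv w.
Proof.
move=> H; rewrite kuv_cons kuv_pre_uv // addn0 eqxx head_rcons_u /hv.
by case: w {H} => [|b s] /=; rewrite ?andbT ?andbF ?(negbTE huv).
Qed.

Lemma kuv_mid_vu w : u \notin w -> kuv v u (u :: rcons w u) = lv w.
Proof. by move=> H; rewrite kuv_cons kuv_pre_vu // (negbTE huv). Qed.

Definition tailp (M : seq (seq V)) (wn : seq V) :=
  flatten [seq rcons w u | w <- M] ++ wn.
Definition build w0 M wn := w0 ++ u :: tailp M wn.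

Lemma steps_tailp M wn :
  steps (u :: tailp M wn) =
  flatten [seq steps (u :: rcons w u) | w <- M] ++ steps (u :: wn).
Proof.
elim: M => [//|w M IH] /=.
rewrite /tailp /= -catA cat_rcons -cat_cons steps_cat -/(tailp M wn) IH.
by rewrite -rcons_cons catA.
Qed.

Lemma steps_build w0 M wn :
  steps (build w0 M wn) = steps (rcons w0 u) ++
  flatten [seq steps (u :: rcons w u) | w <- M] ++ steps (u :: wn).
Proof. by rewrite /build steps_cat steps_tailp. Qed.

Lemma kuv_build x y w0 M wn :
  kuv x y (build w0 M wn) = kuv x y (rcons w0 u) +
  (sumn [seq kuv x y (u :: rcons w u) | w <- M] + kuv x y (u :: wn)).
Proof.
rewrite /kuv steps_build !count_cat count_flatten; congr (_ + (_ + _)).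
by rewrite -map_comp.
Qed.

Definition ufree (w : seq V) := u \notin w.

Lemma kuv_build_uv w0 M wn : ufree w0 -> all ufree M -> ufree wn ->
  kuv u v (build w0 M wn) = count hv M + hv wn.
Proof.
move=> h0 hM hn; rewrite kuv_build kuv_pre_uv // kuv_suf_uv // add0n.
congr (_ + _); elim: M hM => [//|w M IH] /= /andP[hw hM].
by rewrite kuv_mid_uv // IH.
Qed.

Lemma kuv_build_vu w0 M wn : ufree w0 -> all ufree M -> ufree wn ->
  kuv v u (build w0 M wn) = lv w0 + count lv M.
Proof.
move=> h0 hM hn; rewrite kuv_build kuv_pre_vu // kuv_suf_vu // addn0.
congr (_ + _); elim: M hM => [//|w M IH] /= /andP[hw hM].
by rewrite kuv_mid_vu // IH.
Qed.

End Seg.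
Section Apply.
Variables (V : finType) (u v : V).
Local Open Scope nat_scope.
Local Notation hv := (hv u v).
Local Notation lv := (lv u v).
Local Notation ufree := (ufree u).

Definition asym (w : seq V) := hv w != lv w.
Definition both (w : seq V) := hv w && lv w.
Definition canon (w : seq V) := if asym w && ~~ hv w then rev w else w.
Definition sig (M : seq (seq V)) := [seq hv w | w <- M & asym w].

Fixpoint apply (bs : seq bool) (M : seq (seq V)) : seq (seq V) :=
  if M is w :: M' then
    if asym w then
      (if bs is b :: bs' then (if b == hv w then w else rev w) :: apply bs' M'
       else w :: apply bs M')
    else w :: apply bs M'
  else [::].

Definition rel2 (w w' : seq V) := (w' == w) || (w' == rev w).

Lemma asym_rev w : asym (rev w) = asym w.
Proof. by rewrite /asym hv_rev lv_rev eq_sym. Qed.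
Lemma both_rev w : both (rev w) = both w.
Proof. by rewrite /both hv_rev lv_rev andbC. Qed.

Lemma rel2_apply bs M : all2 rel2 M (apply bs M).
Proof.
elim: M bs => [//|w M IH] bs /=.
case: (asym w); last by rewrite /rel2 eqxx IH.
case: bs => [|b bs]; first by rewrite /rel2 eqxx IH.
by case: (b == hv w); rewrite /rel2 eqxx ?orbT IH.
Qed.

Lemma all2_count (p : pred (seq V)) M M' :
  (forall w, p (rev w) = p w) -> all2 rel2 M M' -> count p M' = count p M.
Proof.
move=> pr; elim: M M' => [|w M IH] [|w' M'] //= /andP[r a].
by rewrite (IH _ a); case/orP: r => /eqP ->; rewrite ?pr.
Qed.

Lemma all2_ufree M M' : all2 rel2 M M' -> all ufree M -> all ufree M'.
Proof.
elim: M M' => [|w M IH] [|w' M'] //= /andP[r a] /andP[f fM].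
rewrite (IH _ a fM) andbT.
by case/orP: r => /eqP ->; rewrite // /ufree mem_rev.
Qed.

Lemma canon_apply bs M : map canon (apply bs M) = map canon M.
Proof.
elim: M bs => [//|w M IH] bs /=.
case A: (asym w) => /=; last by rewrite IH.
case: bs => [|b bs]; first by rewrite /= IH.
case: (b == hv w); rewrite /= IH //; congr (_ :: _).
rewrite /canon asym_rev A hv_rev /=.
move: A; rewrite /asym.
by case: (hv w); case: (lv w) => //= _; rewrite revK.
Qed.

Lemma sig_apply bs M : size bs = count asym M -> sig (apply bs M) = bs.
Proof.
elim: M bs => [|w M IH] bs /=; first by case: bs.
case A: (asym w) => /=; last by move/IH; rewrite /sig /= A.
case: bs => [//|b bs] /= [] /IH H.
case E: (b == hv w); rewrite /sig /= ?asym_rev A /= -/(sig _) H.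
  by rewrite (eqP E).
move: E; rewrite hv_rev; move: A; rewrite /asym.
by case: b; case: (hv w); case: (lv w).
Qed.

Lemma apply_sig M : apply (sig M) M = M.
Proof.
elim: M => [//|w M IH] /=; rewrite /sig /=.
by case: (asym w) => /=; rewrite ?eqxx -/(sig M) IH.
Qed.

Lemma asym_canon w : asym (canon w) = asym w.
Proof. by rewrite /canon; case: ifP; rewrite ?asym_rev. Qed.

Lemma apply_canon bs M : size bs = count asym M ->
  apply bs (map canon M) = apply bs M.
Proof.
elim: M bs => [//|w M IH] bs /=.
rewrite asym_canon; case A: (asym w) => /=; last first.
  by move/IH ->; rewrite /canon A.
case: bs => [//|b bs] /= [] /IH ->; congr (_ :: _).
rewrite /canon A /=; case H: (hv w) => /=; first by rewrite H.
rewrite hv_rev revK; move: A; rewrite /asym H; case: (lv w) => // _.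
by case: b.
Qed.

End Apply.
Section Split.
Variables (V : finType) (u v : V).
Local Open Scope nat_scope.
Local Notation hv := (hv u v).
Local Notation lv := (lv u v).
Local Notation ufree := (ufree u).
Local Notation asym := (asym u v).
Local Notation both := (both u v).
Local Notation sig := (sig u v).
Local Notation build := (build u).
Local Notation tailp := (tailp u).

Lemma size_sig M : size (sig M) = count asym M.
Proof. by rewrite size_map size_filter. Qed.

Lemma count_hv M : count hv M = count both M + count id (sig M).
Proof.
rewrite /sig; elim: M => [//|w M IH] /=; rewrite IH.
rewrite /asym /both; case H: (hv w); case L: (lv w); rewrite /= ?H ?L; lia.
Qed.

Lemma count_lv M : count lv M + count id (sig M) = count both M + count asym M.
Proof.
rewrite /sig; elim: M => [//|w M IH] /=.
move: IH; rewrite /asym /both; case H: (hv w); case L: (lv w); rewrite /= ?H ?L; lia.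
Qed.

Fixpoint splitall (s : seq V) : seq (seq V) :=
  if s is x :: s' then
    let L := splitall s' in
    if x == u then [::] :: L else (x :: head [::] L) :: behead L
  else [:: [::]].

Lemma splitall_cons s : exists w L, splitall s = w :: L.
Proof. by case: s => [|x s] /=; [exists [::], [::] | case: (x == u); eexists; eexists]. Qed.

Lemma size_splitall s : size (splitall s) = (count_mem u s).+1.
Proof.
elim: s => [//|x s IH] /=; rewrite eq_sym.
have [w [L E]] := splitall_cons s.
rewrite E /= in IH *; case: (u == x) => /=; lia.
Qed.

Lemma ufree_splitall s : all ufree (splitall s).
Proof.
elim: s => [//|x s IH] /=.
have [w [L E]] := splitall_cons s; rewrite E in IH *.
move: IH => /= /andP[hw hL].
case: eqP => [_|/eqP xu] /=; first by rewrite hw hL.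
by rewrite hL andbT; move: hw; rewrite /ufree in_cons negb_or eq_sym xu.
Qed.

Lemma splitall_free w : ufree w -> splitall w = [:: w].
Proof.
elim: w => [//|x w IH]; rewrite /ufree in_cons negb_or => /andP[ux uw] /=.
by rewrite IH // eq_sym (negbTE ux).
Qed.

Lemma splitall_catu w s : ufree w -> splitall (w ++ u :: s) = w :: splitall s.
Proof.
elim: w => [|x w IH]; first by rewrite /= eqxx.
rewrite /ufree in_cons negb_or => /andP[ux uw] /=.
by rewrite IH // eq_sym (negbTE ux).
Qed.

Lemma splitall_build w0 M wn : ufree w0 -> all ufree M -> ufree wn ->
  splitall (build w0 M wn) = w0 :: rcons M wn.
Proof.
move=> h0 hM hn; rewrite /build splitall_catu //; congr (_ :: _).
elim: M hM => [|w M IH] /=; first by rewrite /tailp /= splitall_free.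
move=> /andP[hw hM]; rewrite /tailp /= -catA cat_rcons splitall_catu //.
by rewrite -/(tailp M wn) IH.
Qed.

Definition d0 s := head [::] (splitall s).
Definition dM s := if behead (splitall s) is r :: rs then belast r rs else [::].
Definition dn s := if behead (splitall s) is r :: rs then last r rs else [::].

Lemma tailp_belast r rs :
  tailp (belast r rs) (last r rs) =
  (if rs is r2 :: rs' then build r (belast r2 rs') (last r2 rs') else r).
Proof. by case: rs => [|r2 rs] //=; rewrite /tailp /= -catA cat_rcons. Qed.

Lemma build_cons x w M wn : build (x :: w) M wn = x :: build w M wn.
Proof. by []. Qed.

Definition unsplit (L : seq (seq V)) :=
  if L is w :: L' then
    (if L' is r :: rs then build w (belast r rs) (last r rs) else w)
  else [::].

Lemma unsplitK s : unsplit (splitall s) = s.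
Proof.
elim: s => [//|x s IH] /=.
have [w [L E]] := splitall_cons s; rewrite E in IH *.
case: eqP => [->|_] /=.
  by rewrite /build /= tailp_belast -IH.
by rewrite -IH; case: L {E IH}.
Qed.

Lemma decompose s : u \in s -> s = build (d0 s) (dM s) (dn s).
Proof.
move=> us; rewrite -{1}(unsplitK s) /d0 /dM /dn.
have := size_splitall s.
have : 0 < count_mem u s by rewrite -has_count has_pred1.
case: (splitall s) => [|w [|r rs]] //=.
by move=> + [] /esym H; rewrite H.
Qed.

Lemma ufree_decomp s :
  [/\ ufree (d0 s), all ufree (dM s) & ufree (dn s)].
Proof.
have := ufree_splitall s; rewrite /d0 /dM /dn.
case: (splitall s) => [|w [|r rs]] //= /andP[-> H]; first by [].
have : all ufree (r :: rs) := H.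
by rewrite (lastI r rs) all_rcons => /andP[].
Qed.

Lemma decomp_build w0 M wn : ufree w0 -> all ufree M -> ufree wn ->
  [/\ d0 (build w0 M wn) = w0, dM (build w0 M wn) = M & dn (build w0 M wn) = wn].
Proof.
move=> h0 hM hn; rewrite /d0 /dM /dn splitall_build //=.
case E: (rcons M wn) => [|r rs]; first by case: (M) E.
by have := lastI r rs; rewrite -E => /rcons_inj [-> ->].
Qed.

End Split.
Fixpoint allseq (n : nat) : seq (seq bool) :=
  if n is n'.+1 then [seq true :: s | s <- allseq n'] ++ [seq false :: s | s <- allseq n']
  else [:: [::]].

Lemma mem_consmap (b c : bool) s L :
  (b :: s \in [seq c :: x | x <- L]) = (b == c) && (s \in L).
Proof.
apply/mapP/andP => [[x xL [-> ->]]|[/eqP -> sL]]; first by rewrite eqxx.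
by exists s.
Qed.

Lemma mem_allseq n s : (s \in allseq n) = (size s == n).
Proof.
elim: n s => [|n IH] [|b s] //=.
  by rewrite mem_cat; apply/negP => /orP[] /mapP [].
rewrite mem_cat !mem_consmap IH eqSS.
by case: b; case: (size s == n).
Qed.

Lemma uniq_allseq n : uniq (allseq n).
Proof.
elim: n => [//|n IH] /=.
have mt : injective (cons true) by move=> x y [].
have mf : injective (cons false) by move=> x y [].
rewrite cat_uniq !map_inj_uniq // IH /= andbT.
by apply/hasP => -[x /mapP [y _ ->] /mapP [z _]].
Qed.

Lemma size_allseq n : size (allseq n) = (2 ^ n)%N.
Proof. by elim: n => [//|n IH] /=; rewrite size_cat !size_map IH expnS mul2n addnn. Qed.

Section Count.
Variable R : realType.

Lemma sum_count_le (T : Type) (P : pred T) (f : T -> R) m L :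
  (forall s, P s -> m <= f s) -> (forall s, 0 <= f s) ->
  (count P L)%:R * m <= \sum_(s <- L) f s.
Proof.
move=> Pm f0; elim: L => [|x L IH]; first by rewrite big_nil mul0r.
rewrite big_cons /=; case Px: (P x) => /=.
  by rewrite natrD mulrDl mul1r lerD // Pm.
by rewrite add0n -[X in X <= _]add0r lerD.
Qed.

Lemma sum_const_seq (T : Type) (L : seq T) (c : R) :
  \sum_(s <- L) c = (size L)%:R * c.
Proof.
elim: L => [|x L IH]; first by rewrite big_nil mul0r.
by rewrite big_cons IH /= -add1n natrD mulrDl mul1r.
Qed.

Definition Xs (s : seq bool) : R := 2 * (count id s)%:R - (size s)%:R.

Lemma sum_Xs2 n : \sum_(s <- allseq n) Xs s ^+ 2 = n%:R * 2 ^+ n.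
Proof.
elim: n => [|n IH]; first by rewrite big_seq1 /Xs /= mulr0 subrr expr0n mul0r.
rewrite /= big_cat /= !big_map.
have E1 s : Xs (true :: s) = Xs s + 1.
  by rewrite /Xs /= -add1n -(add1n (size s)) !natrD; ring.
have E2 s : Xs (false :: s) = Xs s - 1.
  by rewrite /Xs /= -(add1n (size s)) !natrD; ring.
rewrite -big_split /=.
rewrite (eq_bigr (fun s => 2 * Xs s ^+ 2 + 2)); last by move=> s _; rewrite E1 E2; ring.
rewrite big_split /= -mulr_sumr IH sum_const_seq size_allseq natrX exprS.
rewrite -natr1; ring.
Qed.

Definition badq (k e1 e2 B : nat) (bs : seq bool) : bool :=
  (k%:R / 3 : R) <=
  `|((e1 + B + count id bs)%:R : R) - (e2 + B + (size bs - count id bs))%:R|.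

Lemma badq_X k e1 e2 B bs : (e1 <= 1)%N -> (e2 <= 1)%N -> (184 <= k)%N ->
  badq k e1 e2 B bs -> (k%:R / 3 - 1) ^+ 2 <= Xs bs ^+ 2.
Proof.
move=> h1 h2 hk; rewrite /badq.
have -> : ((e1 + B + count id bs)%:R : R) - (e2 + B + (size bs - count id bs))%:R
   = (e1%:R - e2%:R) + Xs bs.
  by rewrite /Xs !natrD natrB ?count_size //; ring.
have he : `|(e1%:R - e2%:R : R)| <= 1.
  by move: h1 h2; case: e1 => [|[|//]]; case: e2 => [|[|//]] _ _;
     rewrite ?subrr ?normr0 ?sub0r ?subr0 ?normrN ?normr1.
have hk' : (184 : R) <= k%:R by rewrite (ler_nat R 184 k).
move=> H.
have H2 : k%:R / 3 - 1 <= `|Xs bs|.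
  by have := ler_normD (e1%:R - e2%:R : R) (Xs bs); lra.
have h0 : 0 <= k%:R / 3 - 1 :> R by lra.
rewrite -[Xs bs ^+ 2]real_normK ?num_real // !expr2.
by apply: ler_pM.
Qed.

Lemma count_bad k e1 e2 B a : (e1 <= 1)%N -> (e2 <= 1)%N ->
  k = (e1 + e2 + 2 * B + a)%N -> (184 <= k)%N ->
  (count (badq k e1 e2 B) (allseq a) <= count (predC (badq k e1 e2 B)) (allseq a))%N.
Proof.
move=> h1 h2 hkE hk.
set cb := count _ _.
have hs := count_predC (badq k e1 e2 B) (allseq a).
rewrite size_allseq in hs.
suff : (2 * cb <= 2 ^ a)%N by rewrite -hs; lia.
set m : R := (k%:R / 3 - 1) ^+ 2.
have Cm : cb%:R * m <= a%:R * 2 ^+ a.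
  rewrite -sum_Xs2; apply: sum_count_le => s; last exact: sqr_ge0.
  exact: badq_X.
have hk' : (184 : R) <= k%:R by rewrite (ler_nat R 184 k).
have hak : (a%:R : R) <= k%:R by rewrite ler_nat hkE; lia.
have mk : 2 * k%:R <= m by rewrite /m; nra.
have N0 : (0 : R) <= 2 ^+ a by rewrite exprn_ge0.
have : ((2 * cb)%N%:R : R) <= (2 ^ a)%N%:R.
  rewrite natrM natrX; nra.
by rewrite ler_nat.
Qed.

Definition phiq k e1 e2 B (bs : seq bool) : seq bool :=
  nth [::] [seq x <- allseq (size bs) | ~~ badq k e1 e2 B x]
    (index bs [seq x <- allseq (size bs) | badq k e1 e2 B x]).

Lemma phiq_mem k e1 e2 B bs : (e1 <= 1)%N -> (e2 <= 1)%N ->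
  k = (e1 + e2 + 2 * B + size bs)%N -> (184 <= k)%N -> badq k e1 e2 B bs ->
  phiq k e1 e2 B bs \in [seq x <- allseq (size bs) | ~~ badq k e1 e2 B x].
Proof.
move=> h1 h2 hkE hk hb; apply: mem_nth.
have := count_bad h1 h2 hkE hk; rewrite -!size_filter => H.
apply: leq_trans H; rewrite index_mem mem_filter hb mem_allseq eqxx //.
Qed.

Lemma phiq_good k e1 e2 B bs : (e1 <= 1)%N -> (e2 <= 1)%N ->
  k = (e1 + e2 + 2 * B + size bs)%N -> (184 <= k)%N -> badq k e1 e2 B bs ->
  size (phiq k e1 e2 B bs) = size bs /\ ~~ badq k e1 e2 B (phiq k e1 e2 B bs).
Proof.
move=> h1 h2 hkE hk hb; have := phiq_mem h1 h2 hkE hk hb.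
by rewrite mem_filter mem_allseq => /andP[-> /eqP ->].
Qed.

Lemma phiq_inj k e1 e2 B bs bs' : (e1 <= 1)%N -> (e2 <= 1)%N ->
  k = (e1 + e2 + 2 * B + size bs)%N -> (184 <= k)%N -> size bs' = size bs ->
  badq k e1 e2 B bs -> badq k e1 e2 B bs' ->
  phiq k e1 e2 B bs = phiq k e1 e2 B bs' -> bs = bs'.
Proof.
move=> h1 h2 hkE hk hs hb hb'.
have H := count_bad h1 h2 hkE hk; rewrite -!size_filter in H.
have i1 : (index bs [seq x <- allseq (size bs) | badq k e1 e2 B x] <
   size [seq x <- allseq (size bs) | ~~ badq k e1 e2 B x])%N.
  by apply: leq_trans H; rewrite index_mem mem_filter hb mem_allseq eqxx.
have i2 : (index bs' [seq x <- allseq (size bs) | badq k e1 e2 B x] <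
   size [seq x <- allseq (size bs) | ~~ badq k e1 e2 B x])%N.
  by apply: leq_trans H; rewrite index_mem mem_filter hb' mem_allseq hs eqxx.
rewrite /phiq hs => /eqP; rewrite nth_uniq ?filter_uniq ?uniq_allseq // => /eqP E.
rewrite -(nth_index [::] (_ : bs \in [seq x <- allseq (size bs) | badq k e1 e2 B x])).
  rewrite E nth_index // mem_filter hb' mem_allseq hs eqxx //.
by rewrite mem_filter hb mem_allseq eqxx.
Qed.

End Count.
Section Inv.
Variables (R : realType) (V : finType) (c : V -> V -> R) (u : V).
Hypothesis c_sym : forall x y, c x y = c y x.
Local Notation build := (build u).
Local Notation tailp := (tailp u).

Definition pis (s : seq V) : R := \prod_(e <- steps s) pjump c e.1 e.2.

Lemma pis_build w0 M wn :
  pis (build w0 M wn) =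
  pis (rcons w0 u) * (\prod_(w <- M) pis (u :: rcons w u)) * pis (u :: wn).
Proof.
rewrite /pis steps_build !big_cat /= big_flatten /= big_map mulrA.
by [].
Qed.

Lemma pjump_sym x y : pjump c y x = (if x == y then 0 else c x y) / cout c y.
Proof. by rewrite /pjump eq_sym c_sym; case: ifP => _; rewrite ?mul0r. Qed.

Lemma pis_rev_closed x t : last x t = x -> pis (rev (x :: t)) = pis (x :: t).
Proof.
move=> hl; rewrite /pis steps_rev big_rev big_map /=.
rewrite (eq_bigr (fun e => (if e.1 == e.2 then 0 else c e.1 e.2) * (cout c e.2)^-1));
  last by move=> e _; rewrite pjump_sym.
rewrite [RHS](eq_bigr (fun e => (if e.1 == e.2 then 0 else c e.1 e.2) * (cout c e.1)^-1));
  last by move=> e _; rewrite /pjump; case: ifP => _; rewrite ?mul0r.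
rewrite !big_split /=; congr (_ * _).
rewrite -(big_map snd xpredT (fun y => (cout c y)^-1)).
rewrite -(big_map fst xpredT (fun y => (cout c y)^-1)).
rewrite steps_cons_zip -/(unzip1 _) -/(unzip2 _).
rewrite unzip1_zip ?size_belast // unzip2_zip ?size_belast //.
apply: perm_big; rewrite -(perm_cons x).
have := lastI x t; rewrite hl => ->.
by rewrite perm_rcons.
Qed.

Lemma pis_loop_rev w : pis (u :: rcons (rev w) u) = pis (u :: rcons w u).
Proof.
have -> : u :: rcons (rev w) u = rev (u :: rcons w u).
  by rewrite rev_cons rev_rcons.
by rewrite pis_rev_closed // last_rcons.
Qed.

Lemma pis_all2 M M' : all2 (@rel2 V) M M' ->
  \prod_(w <- M') pis (u :: rcons w u) = \prod_(w <- M) pis (u :: rcons w u).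
Proof.
elim: M M' => [|w M IH] [|w' M'] //= /andP[r a].
rewrite !big_cons IH //; case/orP: r => /eqP -> //.
by rewrite pis_loop_rev.
Qed.

Lemma pis_build_all2 w0 M M' wn : all2 (@rel2 V) M M' ->
  pis (build w0 M' wn) = pis (build w0 M wn).
Proof. by move=> a; rewrite !pis_build (pis_all2 a). Qed.

Lemma perm_build_all2 w0 M M' wn : all2 (@rel2 V) M M' ->
  perm_eq (build w0 M' wn) (build w0 M wn).
Proof.
move=> a; rewrite /build perm_cat2l perm_cons /tailp perm_cat2r.
elim: M M' a => [|w M IH] [|w' M'] //= /andP[r a].
apply: perm_cat; last exact: IH.
case/orP: r => /eqP -> //.
by rewrite perm_rcons perm_sym perm_rcons perm_cons perm_sym perm_rev.
Qed.

Lemma head_build x w0 M wn : head x (build w0 M wn) = head u w0.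
Proof. by case: w0. Qed.

Lemma last_build x w0 M wn : last x (build w0 M wn) = last u wn.
Proof.
rewrite /build last_cat /= /tailp last_cat; congr last.
elim: M => [//|w M IH] /=; by rewrite last_cat last_rcons.
Qed.

End Inv.
Section Main.
Variables (R : realType) (V : finType) (c : V -> V -> R).
Hypothesis c_sym : forall x y, c x y = c y x.
Variables (u v : V) (k : nat).
Hypothesis huv : u != v.
Hypothesis hk : (184 <= k)%N.

Local Notation hv := (hv u v).
Local Notation lv := (lv u v).
Local Notation ufree := (ufree u).
Local Notation asym := (asym u v).
Local Notation both := (both u v).
Local Notation sig := (sig u v).
Local Notation build := (build u).
Local Notation apply := (apply u v).
Local Notation canon := (canon u v).
Local Notation d0 := (d0 u).
Local Notation dM := (dM u).
Local Notation dn := (dn u).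

Lemma kuvB_uv w0 M wn : ufree w0 -> all ufree M -> ufree wn ->
  kuv u v (build w0 M wn) = (hv wn + count both M + count id (sig M))%N.
Proof.
move=> h0 hM hn; rewrite kuv_build_uv // count_hv; lia.
Qed.

Lemma kuvB_vu w0 M wn : ufree w0 -> all ufree M -> ufree wn ->
  kuv v u (build w0 M wn) =
  (lv w0 + count both M + (size (sig M) - count id (sig M)))%N.
Proof.
move=> h0 hM hn; rewrite kuv_build_vu // size_sig.
have := count_lv u v M; have : (count id (sig M) <= size (sig M))%N by apply: count_size.
rewrite size_sig; lia.
Qed.

Definition phiP (P : seq V) : seq bool :=
  @phiq R k (hv (dn P)) (lv (d0 P)) (count both (dM P)) (sig (dM P)).

Definition Phi (P : seq V) : seq V :=
  build (d0 P) (apply (phiP P) (dM P)) (dn P).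

Definition fib (P : seq V) := (kuv u v P + kuv v u P)%N = k.
Definition badP (P : seq V) :=
  (k%:R / 3 : R) <= `|(kuv u v P)%:R - (kuv v u P)%:R : R|.

Lemma e_le1 (b : bool) : (b <= 1)%N. Proof. by case: b. Qed.

Lemma Phi_build w0 M wn : ufree w0 -> all ufree M -> ufree wn ->
  Phi (build w0 M wn) =
  build w0 (apply (@phiq R k (hv wn) (lv w0) (count both M) (sig M)) M) wn.
Proof. by move=> h0 hM hn; rewrite /Phi /phiP; case: (decomp_build h0 hM hn) => -> -> ->. Qed.

Lemma Phi_props w0 M wn : ufree w0 -> all ufree M -> ufree wn ->
  let P := build w0 M wn in fib P -> badP P ->
  [/\ fib (Phi P), ~~ badP (Phi P), perm_eq (Phi P) P & pis c (Phi P) = pis c P].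
Proof.
move=> h0 hM hn P hf hb; rewrite /P Phi_build //.
set bs := phiq R k _ _ _ (sig M).
have hkE : k = (hv wn + lv w0 + 2 * count both M + size (sig M))%N.
  move: hf; rewrite /fib /P kuvB_uv // kuvB_vu //.
  have : (count id (sig M) <= size (sig M))%N by apply: count_size.
  lia.
have hbq : badq R k (hv wn) (lv w0) (count both M) (sig M).
  by move: hb; rewrite /badP /P kuvB_uv // kuvB_vu //.
have [sz gd] := phiq_good (e_le1 _) (e_le1 _) hkE hk hbq.
rewrite -/bs in sz gd.
have a2 := rel2_apply u v bs M.
have hM' : all ufree (apply bs M) := all2_ufree a2 hM.
have sgE : sig (apply bs M) = bs by rewrite sig_apply // sz size_sig.
have bE : count both (apply bs M) = count both M.
  by apply: all2_count a2 => w; rewrite both_rev.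
split.
- rewrite /fib kuvB_uv // kuvB_vu // sgE bE sz hkE.
  have : (count id bs <= size bs)%N by apply: count_size.
  rewrite sz; lia.
- by rewrite /badP kuvB_uv // kuvB_vu // sgE bE.
- exact: perm_build_all2.
- exact: pis_build_all2.
Qed.

Lemma Phi_facts w0 M wn : ufree w0 -> all ufree M -> ufree wn ->
  let P := build w0 M wn in fib P -> badP P ->
  let bs := @phiq R k (hv wn) (lv w0) (count both M) (sig M) in
  [/\ k = (hv wn + lv w0 + 2 * count both M + size (sig M))%N,
      badq R k (hv wn) (lv w0) (count both M) (sig M),
      size bs = size (sig M), all ufree (apply bs M)
    & sig (apply bs M) = bs /\ count both (apply bs M) = count both M].
Proof.
move=> h0 hM hn P hf hb bs.
have hkE : k = (hv wn + lv w0 + 2 * count both M + size (sig M))%N.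
  move: hf; rewrite /fib /P kuvB_uv // kuvB_vu //.
  have : (count id (sig M) <= size (sig M))%N by apply: count_size.
  lia.
have hbq : badq R k (hv wn) (lv w0) (count both M) (sig M).
  by move: hb; rewrite /badP /P kuvB_uv // kuvB_vu //.
have [sz gd] := phiq_good (e_le1 _) (e_le1 _) hkE hk hbq.
have a2 := rel2_apply u v bs M.
split => //; first exact: all2_ufree a2 hM.
split; first by rewrite sig_apply // sz size_sig.
by apply: all2_count a2 => w; rewrite both_rev.
Qed.

Lemma Phi_inj P Q : u \in P -> u \in Q -> fib P -> badP P -> fib Q -> badP Q ->
  Phi P = Phi Q -> P = Q.
Proof.
move=> uP uQ.
have [h0 hM hn] := ufree_decomp u P; have EP := decompose uP.
have [h0' hM' hn'] := ufree_decomp u Q; have EQ := decompose uQ.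
move: (d0 P) (dM P) (dn P) h0 hM hn EP => w0 M wn h0 hM hn -> {uP}.
move: (d0 Q) (dM Q) (dn Q) h0' hM' hn' EQ => w0' M' wn' h0' hM' hn' -> {uQ}.
move=> fP bP fQ bQ.
have [kE bq sz ua [sgE bE]] := Phi_facts h0 hM hn fP bP.
have [kE' bq' sz' ua' [sgE' bE']] := Phi_facts h0' hM' hn' fQ bQ.
rewrite !Phi_build //.
move=> /(congr1 (fun s => (d0 s, dM s, dn s))).
case: (decomp_build h0 ua hn) => -> -> ->.
case: (decomp_build h0' ua' hn') => -> -> -> [E0 EM En].
subst w0' wn'.
have BE : count both M = count both M' by rewrite -bE EM bE'.
rewrite -BE in sgE' sz' bq' EM.
have sgEq : sig M = sig M'.
  apply: (@phiq_inj R k (hv wn) (lv w0) (count both M) (sig M) (sig M')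
    (e_le1 _) (e_le1 _) kE hk _ bq bq').
    by rewrite -sz -sz' -sgE -sgE' EM.
  by rewrite -sgE -sgE' EM.
have canE : map canon M = map canon M'.
  by rewrite -(canon_apply u v (phiq R k (hv wn) (lv w0) (count both M) (sig M)) M) EM canon_apply.
suff -> : M = M' by [].
rewrite -(apply_sig u v M) -apply_canon ?size_sig // canE sgEq apply_canon ?size_sig //.
by rewrite apply_sig.
Qed.

End Main.
Section EsumAux.
Variables (R : realType) (T : choiceType).
Local Open Scope ereal_scope.

Lemma esum_subset (X Y : set T) (f : T -> \bar R) :
  (forall x, 0 <= f x) -> X `<=` Y -> \esum_(i in X) f i <= \esum_(i in Y) f i.
Proof.
move=> f0 XY; rewrite (esumID X Y) //.
have -> : Y `&` X = X.
  by apply/seteqP; split => x /=; [case | move=> Xx; split => //; apply: XY].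
by rewrite leeDl // esum_ge0.
Qed.

End EsumAux.

Section Nonneg.
Variables (R : realType) (V : finType) (c : V -> V -> R).
Hypothesis c_ge0 : forall x y, 0 <= c x y.

Lemma cout_ge0 x : 0 <= cout c x.
Proof. by apply: sumr_ge0 => y _. Qed.

Lemma pjump_ge0 x y : 0 <= pjump c x y.
Proof. by rewrite /pjump; case: ifP => // _; rewrite divr_ge0 ?cout_ge0. Qed.

Lemma muPG_ge0 v0 (ell : V -> R) P : (forall v, 0 < ell v) -> 0 <= muPG c v0 ell P.
Proof.
move=> ell0; rewrite /muPG /path_prob /fP.
apply: mulr_ge0; first apply: mulr_ge0.
- by apply: prodr_ge0 => e _; apply: pjump_ge0.
- rewrite divr_ge0 // mulr_ge0 ?expR_ge0 // exprn_ge0 // mulr_ge0 ?cout_ge0 //.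
  exact: ltW.
- apply: prodr_ge0 => w _; rewrite /gamma_dens.
  case: (count _ _) => [//|n].
  rewrite divr_ge0 // !mulr_ge0 ?expR_ge0 ?exprn_ge0 ?cout_ge0 //; exact: ltW.
Qed.

End Nonneg.

Lemma muPG_perm (R : realType) (V : finType) (c : V -> V -> R) v0 ell (P Q : seq V) :
  perm_eq P Q -> pis c P = pis c Q -> muPG c v0 ell P = muPG c v0 ell Q.
Proof.
move=> /permP pe hp; rewrite /muPG /path_prob /fP.
rewrite -/(pis c P) -/(pis c Q) hp (pe (pred1 v0)); congr (_ * _).
by apply: eq_bigr => x _; rewrite (pe (pred1 x)).
Qed.
Theorem lemma4p8 (R : realType) (V : finType) (c : V -> V -> R)
  (c_sym : forall x y, c x y = c y x) (c_ge0 : forall x y, 0 <= c x y)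
  (c_conn : connected_network c)
  (v0 : V) (ell : V -> R) (ell_gt0 : forall v, 0 < ell v)
  (u v : V) (huv : u != v) (k : nat) (hk : (184 <= k)%N) :
  nu c v0 ell
    [set P | (kuv u v P + kuv v u P)%N = k /\
             (k%:R / 3 : R) <= `|(kuv u v P)%:R - (kuv v u P)%:R : R| ]
  <= 1 / 2 * nu c v0 ell [set P | (kuv u v P + kuv v u P)%N = k].
Proof.
set A := [set P | _ /\ _]; set Fs := [set P | _].
set f := fun P => (muPG c v0 ell P)%:E.
have f0 : forall P, (0 <= f P)%E by move=> P; rewrite lee_fin muPG_ge0.
set Om := Omega v0.
have PhiA : forall P, (A `&` Om) P ->
    ((Fs `&` Om) `&` ~` A) (Phi R u v k P) /\ f (Phi R u v k P) = f P.
  move=> P [[fP bP] [hd ls sz allv]].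
  have uP : u \in P := allv u.
  have [h0 hM hn] := ufree_decomp u P.
  have EP := decompose uP.
  have := Phi_props c_sym huv hk h0 hM hn; rewrite /= -EP => /(_ fP bP).
  move=> [fQ bQ pQ piQ].
  split; last by rewrite /f; congr (_%:E); apply: muPG_perm.
  split; last by move=> [_ ]; apply/negP.
  split => //; split.
  - by rewrite /Phi head_build -hd [in RHS]EP head_build.
  - by rewrite /Phi last_build -ls [in RHS]EP last_build.
  - by rewrite (perm_size pQ).
  - by move=> x; rewrite (perm_mem pQ).
have Pinj : set_inj (A `&` Om) (Phi R u v k).
  move=> P Q /set_mem[[fP bP] [_ _ _ aP]] /set_mem[[fQ bQ] [_ _ _ aQ]].
  exact: (Phi_inj huv hk (aP u) (aQ u) fP bP fQ bQ).
have key : (\esum_(i in A `&` Om) f i + \esum_(i in A `&` Om) f i <=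
            \esum_(i in Fs `&` Om) f i)%E.
  rewrite [X in (_ <= X)%E](esumID A) //.
  have -> : (Fs `&` Om) `&` A = A `&` Om.
    by apply/seteqP; split => P /= [] [] *; do !split => //; case: H.
  apply: leeD => //.
  rewrite (eq_esum (b := fun i => f (Phi R u v k i))); last first.
    by move=> P /PhiA [_ ->].
  rewrite -(esum_image _ _ f Pinj); apply: esum_subset => // Q [P /PhiA [H _] <-].
  exact: H.
rewrite /nu -/f -/Om.
set ea := \esum_(i in A `&` Om) f i.
set eb := \esum_(i in Fs `&` Om) f i.
set eT := \esum_(i in Om) f i.
have T0 : (0 <= eT)%E by apply: esum_ge0.
have [->|Tn0] := eqVneq (fine eT) 0; first by rewrite !invr0 !mulr0.
have Tfin : eT \is a fin_num.
  by move: T0 Tn0; case: eT => //= _; rewrite eqxx.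
have aT : (ea <= eT)%E by apply: esum_subset => // P [].
have bT : (eb <= eT)%E by apply: esum_subset => // P [].
have a0 : (0 <= ea)%E by apply: esum_ge0.
have b0 : (0 <= eb)%E by apply: esum_ge0.
have afin : ea \is a fin_num.
  by rewrite ge0_fin_numE // (le_lt_trans aT) // -ge0_fin_numE.
have bfin : eb \is a fin_num.
  by rewrite ge0_fin_numE // (le_lt_trans bT) // -ge0_fin_numE.
have key' : fine ea + fine ea <= fine eb.
  by rewrite -lee_fin EFinD !fineK.
have hT : 0 < fine eT by rewrite lt_def Tn0 fine_ge0.
rewrite mulrA ler_pM2r ?invr_gt0 //; lra.
Qed.
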